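(* Let $G_1$ and $G_2$ be two vertex-disjoint simple connected graphs with $|V(G_1)|=n_1$, $|V(G_2)|=n_2$, $|E(G_1)|=m_1$, $|E(G_2)|=m_2$. Then the vertex Q-join $G_1\dot{\vee}_Q G_2$ satisfies \[ F(G_1\dot{\vee}_Q G_2)=F(G_1)+F(G_2)+3n_2M_1(G_1)+3n_1M_1(G_2)+M_4(G_1)+3\,ReZM(G_1)+6m_1n_2^{2}+6m_2n_1^{2}+n_1n_2(n_1^2+n_2^2). \]
   Context: For a simple graph $G$ and $v\in V(G)$, $d_G(v)$ is the degree of $v$. Define $M_1(G)=\sum_{v\in V(G)}d_G(v)^2$, $F(G)=\sum_{v\in V(G)}d_G(v)^3$, $M_4(G)=\sum_{v\in V(G)}d_G(v)^4$, and $ReZM(G)=\sum_{uv\in E(G)}d_G(u)d_G(v)\,[d_G(u)+d_G(v)]$. The graph $Q(G)$ is obtained from $G$ by inserting a new vertex into each edge of $G$ (subdividing it) and then joining by an edge each pair of new vertices that lie on adjacent edges of $G$ (edges sharing an end vertex); let $I(G)$ denote the set of these new vertices, so $V(Q(G))=V(G)\cup I(G)$. The vertex Q-join $G_1\dot{\vee}_Q G_2$ is the graph obtained from $Q(G_1)$ and $G_2$ (taken vertex-disjoint) by joining each vertex of $V(G_1)$ to every vertex of $G_2$ by an edge. *)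

(* Defs.v *)
From mathcomp Require Import all_boot.
Set Implicit Arguments. Unset Strict Implicit. Unset Printing Implicit Defensive.

Definition simple_graph (V : finType) (e : rel V) : Prop :=
  symmetric e /\ irreflexive e.

Definition connected_graph (V : finType) (e : rel V) : Prop :=
  forall x y : V, connect e x y.

Definition deg (V : finType) (e : rel V) (x : V) : nat := #|[pred y | e x y]|.

Definition edges (V : finType) (e : rel V) : {set {set V}} :=
  [set A : {set V} | [exists x, exists y, e x y && (A == [set x; y])]].

Definition nedges (V : finType) (e : rel V) : nat := #|edges e|.

Definition M1 (V : finType) (e : rel V) : nat := \sum_(v : V) deg e v ^ 2.
Definition Fidx (V : finType) (e : rel V) : nat := \sum_(v : V) deg e v ^ 3.
Definition M4 (V : finType) (e : rel V) : nat := \sum_(v : V) deg e v ^ 4.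
Definition ReZM (V : finType) (e : rel V) : nat :=
  \sum_(A in edges e) ((\prod_(x in A) deg e x) * (\sum_(x in A) deg e x)).

(* the type of edges of G (subdivision vertices I(G)) *)
Definition edge_type (V : finType) (e : rel V) : finType :=
  {A : {set V} | A \in edges e}.

Definition QjoinV (V1 V2 : finType) (e1 : rel V1) : finType :=
  ((V1 + edge_type e1) + V2)%type.

Definition Qjoin_adj (V1 V2 : finType) (e1 : rel V1) (e2 : rel V2)
  (a b : QjoinV V2 e1) : bool :=
  match a, b with
  | inl (inl v), inl (inr A) => v \in val A
  | inl (inr A), inl (inl v) => v \in val A
  | inl (inr A), inl (inr B) =>
      (A != B) && (val A :&: val B != set0)
  | inl (inl _), inr _ => true
  | inr _, inl (inl _) => true
  | inr w, inr w' => e2 w w'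
  | _, _ => false
  end.

Arguments Qjoin_adj {V1 V2} e1 e2 a b.

(* Main.v *)
Require Import Defs.
From mathcomp Require Import all_boot zify ring.
Set Implicit Arguments. Unset Strict Implicit. Unset Printing Implicit Defensive.

Lemma card_sumb (T : finType) (P : {pred T}) : #|P| = \sum_(x : T) (x \in P : nat).
Proof. rewrite -sum1_card big_mkcond /=; apply: eq_bigr => x _. by case: (x \in P). Qed.

Lemma edgeP (V : finType) (e : rel V) (sg : simple_graph e) A :
  A \in edges e -> exists x y, [/\ e x y, x != y & A = [set x; y]].
Proof.
rewrite inE => /existsP [x /existsP [y /andP [exy /eqP ->]]].
exists x, y; split => //; apply/eqP => xy; subst; by rewrite sg.2 in exy.
Qed.

Lemma sum_pair (V : finType) (x y : V) (F : V -> nat) :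
  x != y -> \sum_(i in [set x; y]) F i = F x + F y.
Proof. by move=> nxy; rewrite big_setU1 ?big_set1 // inE. Qed.

Lemma incid (V : finType) (e : rel V) (sg : simple_graph e) x :
  #|[set A in edges e | x \in A]| = deg e x.
Proof.
have -> : [set A in edges e | x \in A] = [set [set x; y] | y in [pred y | e x y]].
  apply/setP => A; rewrite inE; apply/andP/imsetP.
  - case=> /(edgeP sg) [u [v [euv nuv ->]]]; rewrite !inE => /orP[/eqP->|/eqP->].
      by exists v.
    exists u; last by rewrite setUC.
    by rewrite inE (sg.1 v u).
  - case=> y; rewrite inE => exy ->; split; last by rewrite !inE eqxx.
    by rewrite inE; apply/existsP; exists x; apply/existsP; exists y; rewrite exy eqxx.
rewrite card_in_imset //.
move=> y z; rewrite !inE => exy exz eq.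
have: z \in [set x; y] by rewrite eq !inE eqxx orbT.
rewrite !inE => /orP[/eqP zx|/eqP->//]; subst; by rewrite sg.2 in exz.
Qed.

Lemma degE (V : finType) (e : rel V) (sg : simple_graph e) x :
  \sum_(A in edges e) (x \in A : nat) = deg e x.
Proof.
rewrite -(incid sg) card_sumb big_mkcond /=; apply: eq_bigr => A _.
by rewrite [in RHS]inE; case: (A \in edges e).
Qed.

Lemma exch (V : finType) (e : rel V) (sg : simple_graph e) (f : V -> nat) :
  \sum_(A in edges e) \sum_(x in A) f x = \sum_x f x * deg e x.
Proof.
under eq_bigr => A _ do rewrite big_mkcond /=.
rewrite exchange_big /=; apply: eq_bigr => x _.
rewrite -(degE sg) big_distrr /=; apply: eq_bigr => A _.
by case: (x \in A); rewrite /= ?muln1 ?muln0.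
Qed.

Lemma edge_deg (V : finType) (e : rel V) (sg : simple_graph e) A0 :
  A0 \in edges e ->
  #|A0| + \sum_(B in edges e) ((A0 != B) && (A0 :&: B != set0) : nat)
  = \sum_(x in A0) deg e x.
Proof.
move=> HA; have [u [v [euv nuv defA]]] := edgeP sg HA.
set S := [set B in edges e | A0 :&: B != set0].
have SU : S = [set B in edges e | u \in B] :|: [set B in edges e | v \in B].
  apply/setP => B; rewrite !inE -andb_orr; congr (_ && _).
  apply/set0Pn/orP.
  - case=> z; rewrite inE defA !inE => /andP[/orP[/eqP->|/eqP->] zB].
      by left. by right.
  - by case=> H; [exists u | exists v]; rewrite inE defA !inE eqxx ?orbT.
have SI : [set B in edges e | u \in B] :&: [set B in edges e | v \in B] = [set A0].
  apply/setP => B; rewrite [in RHS]inE; apply/idP/eqP.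
  - rewrite !inE; case/andP=> /andP[EB uB] /andP[_ vB].
    have EB2 : B \in edges e by rewrite inE.
    have [x [y [exy nxy defB]]] := edgeP sg EB2.
    move: uB vB nuv; rewrite defB defA !inE.
    case/orP=> /eqP-> ; case/orP=> /eqP->; rewrite ?eqxx //.
    by rewrite setUC.
  - move=> ->; apply/setIP; split; apply/setIdP; split; rewrite ?HA // defA !inE eqxx ?orbT //.
have cS : #|S| + 1 = deg e u + deg e v.
  by rewrite SU -(cards1 A0) -SI cardsUI !(incid sg).
have A0S : A0 \in S.
  rewrite inE HA setIid; apply/set0Pn; exists u; by rewrite defA !inE eqxx.
have cS2 := cardsD1 A0 S; rewrite A0S in cS2.
have -> : \sum_(B in edges e) ((A0 != B) && (A0 :&: B != set0) : nat) = #|S :\ A0|.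
  rewrite [#|S :\ A0|]card_sumb big_mkcond /=; apply: eq_bigr => B _.
  rewrite in_setD1 [B \in S]inE eq_sym; by case: (B \in edges e); rewrite ?andbF.
rewrite defA sum_pair // cards2 nuv -defA.
rewrite -cS cS2 /=; lia.
Qed.

Lemma sum1T (T : finType) : \sum_(i : T) 1 = #|T|.
Proof. exact: sum1_card. Qed.

Lemma sum_edge (V : finType) (e : rel V) (F : {set V} -> nat) :
  \sum_(A : edge_type e) F (val A) = \sum_(A in edges e) F A.
Proof. symmetry; exact: (big_sub (edges e) F). Qed.

Lemma degQ_v (V1 V2 : finType) (e1 : rel V1) (e2 : rel V2) (sg : simple_graph e1) v :
  deg (Qjoin_adj e1 e2) (inl (inl v)) = deg e1 v + #|V2|.
Proof.
rewrite {1}/deg card_sumb big_sumType big_sumType /= big1_eq add0n sum1T.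
rewrite -(degE sg) -sum_edge; congr (_ + _); apply: eq_bigr => A _; by rewrite inE.
Qed.

Lemma degQ_w (V1 V2 : finType) (e1 : rel V1) (e2 : rel V2) w :
  deg (Qjoin_adj e1 e2) (inr w) = deg e2 w + #|V1|.
Proof.
rewrite {1}/deg card_sumb big_sumType big_sumType /= big1_eq addn0 addnC sum1T /deg.
congr (_ + _); rewrite card_sumb; apply: eq_bigr => A _; by rewrite inE.
Qed.

Lemma degQ_e (V1 V2 : finType) (e1 : rel V1) (e2 : rel V2) (sg : simple_graph e1) (A : edge_type e1) :
  deg (Qjoin_adj e1 e2) (inl (inr A)) = \sum_(x in val A) deg e1 x.
Proof.
rewrite {1}/deg card_sumb big_sumType big_sumType /= big1_eq addn0.
rewrite -(edge_deg sg (valP A)) -sum_edge card_sumb.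
congr (_ + _); apply: eq_bigr => B _; rewrite inE //.
Qed.

Lemma cube_sum (T : finType) (f : T -> nat) c :
  \sum_x (f x + c) ^ 3 = \sum_x f x ^ 3 + 3 * c * \sum_x f x ^ 2
     + 3 * c ^ 2 * \sum_x f x + #|T| * c ^ 3.
Proof.
have id x : (f x + c) ^ 3 = f x ^ 3 + 3 * c * f x ^ 2 + 3 * c ^ 2 * f x + 1 * c ^ 3 by ring.
under eq_bigr => x _ do rewrite id.
rewrite !big_split /= -!big_distrr /= big1_eq addn0.
have -> : \sum_(i : T) c = #|T| * c by rewrite -sum1T big_distrl /=; apply: eq_bigr => i _; rewrite mul1n.
ring.
Qed.

Lemma prod_pair (V : finType) (x y : V) (F : V -> nat) :
  x != y -> \prod_(i in [set x; y]) F i = F x * F y.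
Proof. by move=> nxy; rewrite big_setU1 ?big_set1 // inE. Qed.

Lemma handshake (V : finType) (e : rel V) (sg : simple_graph e) :
  \sum_x deg e x = 2 * nedges e.
Proof.
have := exch sg (fun _ => 1); under [in RHS]eq_bigr => x _ do rewrite mul1n.
move=> <-; rewrite /nedges -sum1_card big_distrr /=; apply: eq_bigr => A HA.
have [x [y [_ nxy ->]]] := edgeP sg HA; by rewrite sum_pair.
Qed.

Lemma edge_part (V : finType) (e : rel V) (sg : simple_graph e) :
  \sum_(A in edges e) (\sum_(x in A) deg e x) ^ 3 = M4 e + 3 * ReZM e.
Proof.
rewrite /ReZM big_distrr /= /M4.
have -> : \sum_v deg e v ^ 4 = \sum_(A in edges e) \sum_(x in A) deg e x ^ 3.
  rewrite exch //; apply: eq_bigr => x _; by rewrite -expnSr.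
rewrite -big_split /=; apply: eq_bigr => A HA.
have [x [y [_ nxy ->]]] := edgeP sg HA; rewrite !sum_pair // prod_pair //; ring.
Qed.

Theorem theorem5 (V1 V2 : finType) (e1 : rel V1) (e2 : rel V2) :
  simple_graph e1 -> simple_graph e2 ->
  connected_graph e1 -> connected_graph e2 ->
  let n1 := #|V1| in let n2 := #|V2| in
  let m1 := nedges e1 in let m2 := nedges e2 in
  Fidx (Qjoin_adj e1 e2) =
    Fidx e1 + Fidx e2 + 3 * n2 * M1 e1 + 3 * n1 * M1 e2 + M4 e1
    + 3 * ReZM e1 + 6 * m1 * n2 ^ 2 + 6 * m2 * n1 ^ 2
    + n1 * n2 * (n1 ^ 2 + n2 ^ 2).
Proof.
move=> sg1 sg2 _ _ /=.
rewrite /Fidx big_sumType big_sumType /=.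
under eq_bigr => v _ do rewrite (degQ_v e2 sg1).
under [X in _ + X + _]eq_bigr => A _ do rewrite (degQ_e e2 sg1).
under [X in _ + X]eq_bigr => w _ do rewrite (degQ_w e1 e2).
rewrite !cube_sum (sum_edge e1 (fun A => (\sum_(x in A) deg e1 x) ^ 3)) edge_part //.
rewrite !handshake // /M1.
ring.
Qed.
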